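(* Let $(Y,\rho)$ be a metric space, let $\hookrightarrow_*$ be a monotone embedding relation on the subsets of $Y$, let $X$ be a paracompact space, and let $\varphi:X\rightrightarrows Y$ be a $\rho$-continuous set-valued mapping such that each $\varphi(x)$, $x\in X$, is uniformly $UV^*$. Then for every continuous function $\varepsilon:X\to(0,+\infty)$ there exist a sequence $\mathscr{U}_n$, $n<\omega$, of open covers of $X$ and set-valued mappings $\Phi_n,\Psi_n:\mathscr{U}_n\rightrightarrows Y$ such that for every $n<\omega$ and every $U\in\mathscr{U}_n$: (i) $\Phi_n(U)\hookrightarrow_*\Psi_n(U)\subset \mathbf{O}_{\varepsilon(p)}(\varphi(p))$ for every $p\in U$; (ii) $\Psi_k(V)\subset\Phi_n(U)$ whenever $k>n$ and $V\in\mathscr{U}_k$ with $V\cap U\neq\emptyset$.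
   Context: All covers consist of nonempty sets. A set-valued mapping $\varphi:X\rightrightarrows Y$ assigns to each $x\in X$ a nonempty subset $\varphi(x)\subset Y$. For a metric space $(Y,\rho)$, $\mathbf{O}_\varepsilon(y)$ is the open $\varepsilon$-ball about $y$ and $\mathbf{O}_\varepsilon(S)=\bigcup_{q\in S}\mathbf{O}_\varepsilon(q)$ for $S\subset Y$. A mapping $\varphi:X\rightrightarrows Y$ is $\rho$-continuous if for every $\varepsilon>0$ each $x\in X$ has a neighbourhood $V$ with $\varphi(x)\subset\mathbf{O}_\varepsilon(\varphi(p))$ and $\varphi(p)\subset\mathbf{O}_\varepsilon(\varphi(x))$ for all $p\in V$. An embedding relation $\hookrightarrow_*$ on subsets of $Y$ is a relation $S\hookrightarrow_* T$ between subsets with $S\hookrightarrow_*T$ implying $S\subset T$; it is monotone if $A\subset S\hookrightarrow_* T\subset B$ implies $A\hookrightarrow_* B$. A subset $S\subset Y$ is uniformly $UV^*$ if for every $\varepsilon>0$ there is $\delta>0$ with $\mathbf{O}_\delta(S)\hookrightarrow_*\mathbf{O}_\varepsilon(S)$. *)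

(* Defs.v *)
From Stdlib Require Import Reals List Classical.
Open Scope R_scope.

Record is_metric (Y : Type) (rho : Y -> Y -> R) : Prop := {
  metric_nonneg : forall x y, 0 <= rho x y;
  metric_eq0 : forall x y, rho x y = 0 <-> x = y;
  metric_sym : forall x y, rho x y = rho y x;
  metric_tri : forall x y z, rho x z <= rho x y + rho y z
}.

Definition ball {Y : Type} (rho : Y -> Y -> R) (eps : R) (y : Y) : Y -> Prop :=
  fun z => rho y z < eps.
Definition nbhd {Y : Type} (rho : Y -> Y -> R) (eps : R) (S : Y -> Prop) : Y -> Prop :=
  fun z => exists q, S q /\ ball rho eps q z.

Definition subset {T : Type} (A B : T -> Prop) : Prop := forall t, A t -> B t.
Definition nonempty {T : Type} (A : T -> Prop) : Prop := exists t, A t.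
Definition meets {T : Type} (A B : T -> Prop) : Prop := exists t, A t /\ B t.

Record is_topology (X : Type) (opn : (X -> Prop) -> Prop) : Prop := {
  top_full : opn (fun _ => True);
  top_inter : forall A B, opn A -> opn B -> opn (fun x => A x /\ B x);
  top_union : forall F : (X -> Prop) -> Prop,
      (forall A, F A -> opn A) -> opn (fun x => exists A, F A /\ A x)
}.

Definition hausdorff {X : Type} (opn : (X -> Prop) -> Prop) : Prop :=
  forall x y, x <> y -> exists A B, opn A /\ opn B /\ A x /\ B y /\
     (forall z, ~ (A z /\ B z)).

Definition covers {X : Type} (F : (X -> Prop) -> Prop) : Prop :=
  forall x, exists A, F A /\ A x.

Definition open_cover {X : Type} (opn : (X -> Prop) -> Prop)
  (F : (X -> Prop) -> Prop) : Prop :=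
  (forall A, F A -> opn A /\ nonempty A) /\ covers F.

Definition refines {X : Type} (G F : (X -> Prop) -> Prop) : Prop :=
  forall B, G B -> exists A, F A /\ subset B A.

Definition locally_finite {X : Type} (opn : (X -> Prop) -> Prop)
  (F : (X -> Prop) -> Prop) : Prop :=
  forall x, exists W, opn W /\ W x /\
    exists l : list (X -> Prop), forall A, F A -> meets W A -> In A l.

Definition paracompact {X : Type} (opn : (X -> Prop) -> Prop) : Prop :=
  hausdorff opn /\
  forall F, open_cover opn F ->
    exists G, open_cover opn G /\ refines G F /\ locally_finite opn G.

Definition continuous_real {X : Type} (opn : (X -> Prop) -> Prop) (f : X -> R) : Prop :=
  forall x eta, 0 < eta -> exists W, opn W /\ W x /\
    forall p, W p -> Rabs (f p - f x) < eta.

Definition rho_continuous {X Y : Type} (opn : (X -> Prop) -> Prop)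
  (rho : Y -> Y -> R) (phi : X -> Y -> Prop) : Prop :=
  forall eps, 0 < eps -> forall x, exists V, opn V /\ V x /\
    forall p, V p -> subset (phi x) (nbhd rho eps (phi p)) /\
                     subset (phi p) (nbhd rho eps (phi x)).

Definition embedding_relation {Y : Type} (emb : (Y -> Prop) -> (Y -> Prop) -> Prop) : Prop :=
  forall S T, emb S T -> subset S T.

Definition monotone_emb {Y : Type} (emb : (Y -> Prop) -> (Y -> Prop) -> Prop) : Prop :=
  forall A S T B, subset A S -> emb S T -> subset T B -> emb A B.

Definition uniformly_UV {Y : Type} (rho : Y -> Y -> R)
  (emb : (Y -> Prop) -> (Y -> Prop) -> Prop) (S : Y -> Prop) : Prop :=
  forall eps, 0 < eps -> exists delta, 0 < delta /\
    emb (nbhd rho delta S) (nbhd rho eps S).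

(* Main.v *)
Require Import Defs.
From Stdlib Require Import Reals List Classical.
From Stdlib Require Import ClassicalEpsilon Lra.
Open Scope R_scope.

Definition Inv {X Y : Type} (opn : (X -> Prop) -> Prop) (rho : Y -> Y -> R)
  (phi : X -> Y -> Prop) (D : (X -> Prop) -> (Y -> Prop) -> Prop) : Prop :=
  forall x, exists W, opn W /\ W x /\ exists m, 0 < m /\
    forall U S z, D U S -> W z -> U z -> subset (nbhd rho m (phi z)) S.

Definition Pstep {X Y : Type} (opn : (X -> Prop) -> Prop) (rho : Y -> Y -> R)
  (emb : (Y -> Prop) -> (Y -> Prop) -> Prop)
  (phi : X -> Y -> Prop) (eps : X -> R) (D : (X -> Prop) -> (Y -> Prop) -> Prop)
  (G : (X -> Prop) -> Prop) (Ph Ps : (X -> Prop) -> (Y -> Prop)) : Prop :=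
  open_cover opn G /\ locally_finite opn G /\
  (forall U, G U -> nonempty (Ph U) /\ nonempty (Ps U) /\ emb (Ph U) (Ps U) /\
     (forall p, U p -> subset (Ps U) (nbhd rho (eps p) (phi p))) /\
     (exists r, 0 < r /\ forall z, U z -> subset (nbhd rho r (phi z)) (Ph U)) /\
     (forall U' S, D U' S -> meets U U' -> subset (Ps U) S)).

Definition next {X Y : Type} (D : (X -> Prop) -> (Y -> Prop) -> Prop)
  (G : (X -> Prop) -> Prop) (Ph : (X -> Prop) -> (Y -> Prop)) :=
  fun U S => D U S \/ (G U /\ S = Ph U).

Lemma nbhd_mono {Y : Type} (rho : Y -> Y -> R) r r' S :
  r <= r' -> subset (nbhd rho r S) (nbhd rho r' S).
Proof.
  intros H y [q [Hq Hb]]. exists q. split; auto. unfold ball in *. lra.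
Qed.

Lemma inv_next {X Y : Type} opn rho emb (phi : X -> Y -> Prop) eps
  (Htop : is_topology X opn) D G Ph Ps :
  Inv opn rho phi D -> Pstep opn rho emb phi eps D G Ph Ps ->
  Inv opn rho phi (next D G Ph).
Proof.
  intros HD [HG [Hlf HP]] x.
  destruct (HD x) as [W1 [HW1 [HxW1 [m1 [Hm1 Hm1p]]]]].
  destruct (Hlf x) as [W2 [HW2 [HxW2 [l Hl]]]].
  assert (Hmin : exists m2, 0 < m2 /\ forall A, In A l -> G A -> forall z, A z ->
            subset (nbhd rho m2 (phi z)) (Ph A)).
  { clear Hl. induction l as [|A l IH].
    - exists 1. split; [lra|]. intros A [].
    - destruct IH as [m [Hm Hmp]].
      destruct (classic (G A)) as [HA|HA].
      + destruct (HP A HA) as [_ [_ [_ [_ [[r [Hr Hrp]] _]]]]].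
        exists (Rmin m r). split; [apply Rmin_glb_lt; lra|].
        intros A' [<-|Hin] HA' z Hz.
        * intros y Hy. apply (Hrp z Hz). revert Hy. apply nbhd_mono. apply Rmin_r.
        * intros y Hy. apply (Hmp A' Hin HA' z Hz). revert Hy. apply nbhd_mono. apply Rmin_l.
      + exists m. split; auto. intros A' [<-|Hin] HA'; [contradiction|]. auto. }
  destruct Hmin as [m2 [Hm2 Hm2p]].
  exists (fun z => W1 z /\ W2 z). split; [apply (top_inter _ _ Htop); auto|].
  split; [auto|]. exists (Rmin m1 m2). split; [apply Rmin_glb_lt; lra|].
  intros U S z [HDU|[HGU ->]] [Hz1 Hz2] HUz y Hy.
  - apply (Hm1p U S z HDU Hz1 HUz). revert Hy. apply nbhd_mono. apply Rmin_l.
  - apply (Hm2p U) with (z := z); auto. apply Hl; auto. exists z; auto.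
    revert Hy. apply nbhd_mono. apply Rmin_r.
Qed.

Lemma step_exists (Y : Type) (rho : Y -> Y -> R) (Hrho : is_metric Y rho)
  (emb : (Y -> Prop) -> (Y -> Prop) -> Prop)
  (X : Type) (opn : (X -> Prop) -> Prop) (Htop : is_topology X opn)
  (Hpara : paracompact opn)
  (phi : X -> Y -> Prop) (Hphi_ne : forall x, nonempty (phi x))
  (Hphi_cont : rho_continuous opn rho phi)
  (Hphi_UV : forall x, uniformly_UV rho emb (phi x))
  (eps : X -> R) (Heps_pos : forall x, 0 < eps x)
  (Heps_cont : continuous_real opn eps) D :
  Inv opn rho phi D -> exists G Ph Ps, Pstep opn rho emb phi eps D G Ph Ps.
Proof.
  intros HD.
  assert (tri : forall q q' y e1 e2, rho q' q < e1 -> rho q y < e2 -> rho q' y < e1 + e2).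
  { intros q q' y e1 e2 H1 H2. pose proof (metric_tri _ _ Hrho q' q y). lra. }
  assert (refl0 : forall q, rho q q = 0).
  { intro q. apply (proj2 (metric_eq0 _ _ Hrho q q)). reflexivity. }
  set (Good := fun (O : X -> Prop) (Ph0 Ps0 : Y -> Prop) =>
    nonempty Ph0 /\ nonempty Ps0 /\ emb Ph0 Ps0 /\
    (forall p, O p -> subset Ps0 (nbhd rho (eps p) (phi p))) /\
    (exists r, 0 < r /\ forall z, O z -> subset (nbhd rho r (phi z)) Ph0) /\
    (forall U S, D U S -> meets O U -> subset Ps0 S)).
  assert (Gmono : forall O O' a b, subset O' O -> Good O a b -> Good O' a b).
  { intros O O' a b HO [H1 [H2 [H3 [H4 [[r [Hr H5]] H6]]]]].
    split; [exact H1|]. split; [exact H2|]. split; [exact H3|].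
    split; [intros p Hp; apply H4; auto|].
    split; [exists r; split; auto|].
    intros U S HUS [t [Ht1 Ht2]]. apply (H6 U S HUS). exists t; auto. }
  set (F := fun O => opn O /\ nonempty O /\ exists a b, Good O a b).
  assert (HF : open_cover opn F).
  { split. { intros A [H1 [H2 _]]. auto. }
    intro x.
    destruct (HD x) as [W1 [HW1 [HxW1 [m1 [Hm1 HDm]]]]].
    assert (Hex : 0 < eps x) by apply Heps_pos.
    destruct (Heps_cont x (eps x / 2)) as [W2 [HW2 [HxW2 HepsW]]]; [lra|].
    set (m := Rmin m1 (eps x / 2)).
    assert (Hm : 0 < m) by (unfold m; apply Rmin_glb_lt; lra).
    assert (Hmm1 : m <= m1) by apply Rmin_l.
    assert (Hme : m <= eps x / 2) by apply Rmin_r.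
    destruct (Hphi_UV x (m/2)) as [a [Ha Hemb]]; [lra|].
    set (eta := Rmin a (m/2) / 2).
    assert (Heta1 : eta <= a / 2) by (unfold eta; pose proof (Rmin_l a (m/2)); lra).
    assert (Heta2 : eta <= m / 4) by (unfold eta; pose proof (Rmin_r a (m/2)); lra).
    assert (Heta : 0 < eta) by (unfold eta; pose proof (Rmin_glb_lt a (m/2) 0 Ha ltac:(lra)); lra).
    destruct (Hphi_cont eta Heta x) as [W3 [HW3 [HxW3 Hcl]]].
    exists (fun z => (W1 z /\ W2 z) /\ W3 z). split; [|split; [split|]; auto].
    split; [apply (top_inter _ _ Htop); [apply (top_inter _ _ Htop)|]; auto|].
    split; [exists x; auto|].
    exists (nbhd rho a (phi x)), (nbhd rho (m/2) (phi x)).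
    destruct (Hphi_ne x) as [q0 Hq0].
    split. { exists q0; exists q0; split; [exact Hq0|]. unfold ball; rewrite refl0; lra. }
    split. { exists q0; exists q0; split; [exact Hq0|]. unfold ball; rewrite refl0; lra. }
    split; [exact Hemb|].
    split.
    { intros p [[Hp1 Hp2] Hp3] y [q [Hq Hqy]].
      destruct (proj1 (Hcl p Hp3) q Hq) as [q' [Hq' Hq'q]].
      exists q'. split; auto. unfold ball in *.
      pose proof (HepsW p Hp2) as He. apply Rabs_def2 in He.
      pose proof (tri q q' y _ _ Hq'q Hqy). lra. }
    split.
    { exists (a - eta). split; [lra|].
      intros z [[Hz1 Hz2] Hz3] y [q [Hq Hqy]].
      destruct (proj2 (Hcl z Hz3) q Hq) as [q' [Hq' Hq'q]].
      exists q'. split; auto. unfold ball in *.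
      pose proof (tri q q' y _ _ Hq'q Hqy). lra. }
    { intros U S HUS [z [[[Hz1 Hz2] Hz3] HUz]] y [q [Hq Hqy]].
      apply (HDm U S z HUS Hz1 HUz).
      destruct (proj1 (Hcl z Hz3) q Hq) as [q' [Hq' Hq'q]].
      exists q'. split; auto. unfold ball in *.
      pose proof (tri q q' y _ _ Hq'q Hqy). lra. } }
  destruct Hpara as [_ Hp]. destruct (Hp F HF) as [G [HG [Href Hlf]]].
  assert (Hch : forall B, exists ab : (Y -> Prop) * (Y -> Prop),
             G B -> Good B (fst ab) (snd ab)).
  { intro B. destruct (classic (G B)) as [HB|HB].
    - destruct (Href B HB) as [O [[_ [_ [a [b Hab]]]] HBO]].
      exists (a, b). intros _. eapply Gmono; eauto.
    - exists ((fun _ => False), (fun _ => False)). tauto. }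
  exists G, (fun B => fst (proj1_sig (constructive_indefinite_description _ (Hch B)))),
            (fun B => snd (proj1_sig (constructive_indefinite_description _ (Hch B)))).
  split; [exact HG|]. split; [exact Hlf|].
  intros U HU. exact (proj2_sig (constructive_indefinite_description _ (Hch U)) HU).
Qed.

Fixpoint st {X Y : Type}
  (ch : ((X -> Prop) -> (Y -> Prop) -> Prop) ->
        ((X -> Prop) -> Prop) * ((X -> Prop) -> (Y -> Prop)) * ((X -> Prop) -> (Y -> Prop)))
  (k : nat) : (X -> Prop) -> (Y -> Prop) -> Prop :=
  match k with
  | O => fun _ _ => False
  | S k => next (st ch k) (fst (fst (ch (st ch k)))) (snd (fst (ch (st ch k))))
  end.

Lemma st_mono {X Y : Type} ch n k (U : X -> Prop) (S : Y -> Prop) :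
  (n <= k)%nat -> st ch n U S -> st ch k U S.
Proof.
  induction 1; auto. intros Hst. simpl. left. auto.
Qed.

Theorem theorem2p1
  (Y : Type) (rho : Y -> Y -> R) (Hrho : is_metric Y rho)
  (emb : (Y -> Prop) -> (Y -> Prop) -> Prop)
  (Hemb : embedding_relation emb) (Hmon : monotone_emb emb)
  (X : Type) (opn : (X -> Prop) -> Prop) (Htop : is_topology X opn)
  (Hpara : paracompact opn)
  (phi : X -> Y -> Prop) (Hphi_ne : forall x, nonempty (phi x))
  (Hphi_cont : rho_continuous opn rho phi)
  (Hphi_UV : forall x, uniformly_UV rho emb (phi x))
  (eps : X -> R) (Heps_pos : forall x, 0 < eps x)
  (Heps_cont : continuous_real opn eps) :
  exists (Cov : nat -> (X -> Prop) -> Prop)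
         (Phi Psi : nat -> (X -> Prop) -> (Y -> Prop)),
    (forall n, open_cover opn (Cov n)) /\
    (forall n U, Cov n U -> nonempty (Phi n U) /\ nonempty (Psi n U)) /\
    (forall n U, Cov n U ->
        emb (Phi n U) (Psi n U) /\
        forall p, U p -> subset (Psi n U) (nbhd rho (eps p) (phi p))) /\
    (forall n k U V, (n < k)%nat -> Cov n U -> Cov k V -> meets V U ->
        subset (Psi k V) (Phi n U)).
Proof.
  assert (ex_step : forall D, exists L : ((X -> Prop) -> Prop) * ((X -> Prop) -> (Y -> Prop)) * ((X -> Prop) -> (Y -> Prop)),
     Inv opn rho phi D -> Pstep opn rho emb phi eps D (fst (fst L)) (snd (fst L)) (snd L)).
  { intro D. destruct (classic (Inv opn rho phi D)) as [HD|HD].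
    - destruct (step_exists Y rho Hrho emb X opn Htop Hpara phi Hphi_ne Hphi_cont
                  Hphi_UV eps Heps_pos Heps_cont D HD) as [G [Ph [Ps HP]]].
      exists (G, Ph, Ps). intros _. exact HP.
    - exists ((fun _ => False), (fun _ _ => False), (fun _ _ => False)). tauto. }
  set (ch := fun D => proj1_sig (constructive_indefinite_description _ (ex_step D))).
  assert (Hch : forall D, Inv opn rho phi D ->
     Pstep opn rho emb phi eps D (fst (fst (ch D))) (snd (fst (ch D))) (snd (ch D))).
  { intros D HD. exact (proj2_sig (constructive_indefinite_description _ (ex_step D)) HD). }
  assert (Hinv : forall k, Inv opn rho phi (st ch k)).
  { induction k.
    - intro x. exists (fun _ => True). split; [apply (top_full _ _ Htop)|]. split; auto.
      exists 1. split; [lra|]. intros U S z [].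
    - simpl. eapply inv_next; eauto. }
  exists (fun k => fst (fst (ch (st ch k)))), (fun k => snd (fst (ch (st ch k)))),
         (fun k => snd (ch (st ch k))).
  split; [intro n; exact (proj1 (Hch _ (Hinv n)))|].
  split; [intros n U HU; destruct (Hch _ (Hinv n)) as [_ [_ HP]];
          destruct (HP U HU) as [H1 [H2 _]]; auto|].
  split; [intros n U HU; destruct (Hch _ (Hinv n)) as [_ [_ HP]];
          destruct (HP U HU) as [_ [_ [H3 [H4 _]]]]; auto|].
  intros n k U V Hnk HU HV HVU.
  destruct (Hch _ (Hinv k)) as [_ [_ HP]].
  destruct (HP V HV) as [_ [_ [_ [_ [_ H6]]]]].
  apply (H6 U); auto.
  apply (st_mono ch (S n) k); auto. simpl. right. auto.
Qed.
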